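(* Let $m\ge2$, $n\ge1$ with $m(n-1)$ even, let $\mathcal{H}$ be the real $m^{\rm th}$-order $n$-dimensional Hankel tensor generated by ${\bf h}\in\mathbb{R}^{m(n-1)+1}$, and let $H$ be its associated Hankel matrix. Define the positive constant $c$ (depending on $m,n$) by $c=\min_{0\ne{\bf y}\in\mathbb{R}^n}\|{\bf y}^{\ast\frac m2}\|_2^2/\|{\bf y}\|_m^m$ if $m$ is even, and $c=\min_{0\ne{\bf y}\in\mathbb{R}^n}\|{\bf y}^{\ast\frac{m-1}2}\|_2^2/\|{\bf y}\|_{m-1}^{m-1}$ if $m$ is odd. If $H$ is positive semi-definite, then every H-eigenvalue $\lambda$ of $\mathcal{H}$ satisfies $\lambda\ge c\,\lambda_{\min}(H)$ (i.e. $\lambda_{\min}(\mathcal{H})\ge c\,\lambda_{\min}(H)$). If $H$ is negative semi-definite, then every H-eigenvalue $\lambda$ of $\mathcal{H}$ satisfies $\lambda\le c\,\lambda_{\max}(H)$ (i.e. $\lambda_{\max}(\mathcal{H})\le c\,\lambda_{\max}(H)$).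
   Context: The Hankel tensor generated by ${\bf h}=(h_0,\dots,h_{m(n-1)})$ has entries $\mathcal{H}_{i_1\dots i_m}=h_{i_1+\dots+i_m}$, $0\le i_j\le n-1$; its associated Hankel matrix is $H$ with $H_{ij}=h_{i+j}$, $0\le i,j\le m(n-1)/2$; $\lambda_{\min}(H),\lambda_{\max}(H)$ are its extreme eigenvalues. Convolution: for ${\bf u}\in\mathbb{R}^{n_1},{\bf v}\in\mathbb{R}^{n_2}$ (indexed from $0$), $({\bf u}\ast{\bf v})_j=\sum_{i=0}^j u_iv_{j-i}$ with out-of-range entries zero, and ${\bf y}^{\ast p}$ is the $p$-fold convolution of ${\bf y}$ with itself. A real $\lambda$ is an H-eigenvalue of $\mathcal{H}$ if there is nonzero ${\bf x}\in\mathbb{R}^n$ with $\mathcal{H}{\bf x}^{m-1}=\lambda{\bf x}^{[m-1]}$, where $(\mathcal{H}{\bf x}^{m-1})_i=\sum_{i_2,\dots,i_m}\mathcal{H}_{ii_2\dots i_m}x_{i_2}\cdots x_{i_m}$ and ${\bf x}^{[m-1]}=(x_i^{m-1})_i$; $\lambda_{\min}(\mathcal{H}),\lambda_{\max}(\mathcal{H})$ are the smallest and largest H-eigenvalues (when they exist). $\|\cdot\|_p$ is the $\ell_p$-norm. *)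

(* Defs.v *)
From HB Require Import structures.
From mathcomp Require Import all_boot all_order all_algebra.
From mathcomp Require Import reals.
Set Implicit Arguments. Unset Strict Implicit. Unset Printing Implicit Defensive.
Import Order.TTheory GRing.Theory Num.Theory.
Local Open Scope ring_scope.

Section Hankel.
Variable R : realType.

Definition hget (m n : nat) (h : 'rV[R]_(m * (n - 1)).+1) (k : nat) : R :=
  h 0 (inord k).

(* (H x^{m-1})_i = sum_{i_2..i_m} h_{i+i_2+...+i_m} x_{i_2} ... x_{i_m} *)
Definition hankel_tensor_apply (m n : nat) (h : 'rV[R]_(m * (n - 1)).+1)
  (x : 'rV[R]_n) (i : 'I_n) : R :=
  \sum_(t : (m.-1).-tuple 'I_n)
     hget h (i + \sum_(j <- t) nat_of_ord j)%N * \prod_(j <- t) x 0 j.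

Definition H_eigenvalue (m n : nat) (h : 'rV[R]_(m * (n - 1)).+1) (lam : R) : Prop :=
  exists x : 'rV[R]_n, x != 0 /\
    forall i : 'I_n, hankel_tensor_apply h x i = lam * x 0 i ^+ (m.-1).

Definition hankel_mx (m n : nat) (h : 'rV[R]_(m * (n - 1)).+1)
  : 'M[R]_((m * (n - 1))./2.+1) :=
  \matrix_(i, j) hget h (i + j)%N.

Definition psd (N : nat) (A : 'M[R]_N) : Prop :=
  forall x : 'cV[R]_N, 0 <= (x^T *m A *m x) 0 0.
Definition nsd (N : nat) (A : 'M[R]_N) : Prop :=
  forall x : 'cV[R]_N, (x^T *m A *m x) 0 0 <= 0.

Definition is_lambda_min (N : nat) (A : 'M[R]_N) (l : R) : Prop :=
  eigenvalue A l /\ forall a, eigenvalue A a -> l <= a.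
Definition is_lambda_max (N : nat) (A : 'M[R]_N) (l : R) : Prop :=
  eigenvalue A l /\ forall a, eigenvalue A a -> a <= l.

Definition conv (u v : seq R) : seq R :=
  mkseq (fun j => \sum_(i < j.+1) u`_i * v`_(j - i)) (size u + size v).-1.

(* p-fold convolution of y with itself (p >= 1) *)
Definition convpow (y : seq R) (p : nat) : seq R := iter p.-1 (conv y) y.

Definition norm2sq (s : seq R) : R := \sum_(a <- s) a ^+ 2.

Definition normpow (n : nat) (y : 'rV[R]_n) (q : nat) : R :=
  \sum_(i < n) `|y 0 i| ^+ q.

Definition vseq (n : nat) (y : 'rV[R]_n) : seq R := [seq y 0 i | i <- enum 'I_n].

Definition c_ratio (m n : nat) (y : 'rV[R]_n) : R :=
  if ~~ odd m then norm2sq (convpow (vseq y) (m %/ 2)) / normpow y m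
  else norm2sq (convpow (vseq y) ((m - 1) %/ 2)) / normpow y (m - 1).

Definition is_hankel_const (m n : nat) (c : R) : Prop :=
  (exists2 y : 'rV[R]_n, y != 0 & c_ratio m y = c) /\
  (forall y : 'rV[R]_n, y != 0 -> c <= c_ratio m y).

End Hankel.

(* Main.v *)
Require Import Defs.
From HB Require Import structures.
From mathcomp Require Import all_boot all_order all_algebra.
From mathcomp Require Import reals.
From mathcomp Require Import classical_sets.
From mathcomp Require Import ring lra zify.
Import Order.TTheory GRing.Theory Num.Theory.
Set Implicit Arguments. Unset Strict Implicit. Unset Printing Implicit Defensive.
Local Open Scope ring_scope.
Section QF.
Variable R : realType.

Definition bil N (A : 'M[R]_N) (u w : 'cV[R]_N) : R := (u^T *m A *m w) 0 0.

Lemma bil_sym N (A : 'M[R]_N) u w : A^T = A -> bil A w u = bil A u w.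
Proof.
move=> sA; rewrite /bil.
have tr : forall M : 'M[R]_1, M 0 0 = M^T 0 0 by move=> M; rewrite mxE.
by rewrite tr !trmx_mul trmxK sA mulmxA.
Qed.

Lemma bil_expand N (A : 'M[R]_N) u w t : A^T = A ->
  bil A (u + t *: w) (u + t *: w) = bil A u u + 2 * t * bil A u w + t ^+ 2 * bil A w w.
Proof.
move=> sA; have := bil_sym u w sA; rewrite /bil.
have -> : (u + t *: w)^T = u^T + t *: w^T by rewrite linearD linearZ.
rewrite /bil !mulmxDl !mulmxDr -!scalemxAl -!scalemxAr !mxE => ->.
ring.
Qed.

Lemma discr (a b c : R) : 0 <= c -> (forall t, 0 <= a + 2 * t * b + t ^+ 2 * c) -> b ^+ 2 <= a * c.
Proof.
move=> c0 H.
have [cp|] := ltrP 0 c.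
  have := H (- b / c). set t := - b / c => Ht.
  have e : t * c = - b by rewrite /t mulrVK ?unitfE ?gt_eqF.
  have : 0 <= (a + 2 * t * b + t ^+ 2 * c) * c by apply: mulr_ge0 => //; exact: ltW.
  have -> : (a + 2 * t * b + t ^+ 2 * c) * c = a * c + 2 * (t * c) * b + (t * c) ^+ 2 by ring.
  rewrite e. nra.
move=> c0'; have c00 : c = 0 by apply/eqP; rewrite eq_le c0' c0.
have [b0|bn0] := eqVneq b 0; first by rewrite b0 c00; lra.
have := H (- (a + 1) / (2 * b)); rewrite c00 mulr0 addr0.
have -> : 2 * (- (a + 1) / (2 * b)) * b = - (a + 1).
  by field.
lra.
Qed.

Definition psdm N (A : 'M[R]_N) := forall v : 'cV[R]_N, 0 <= bil A v v.

Lemma cauchy_schwarz N (A : 'M[R]_N) u w : A^T = A -> psdm A ->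
  bil A u w ^+ 2 <= bil A u u * bil A w w.
Proof.
move=> sA pA; apply: discr => // t; rewrite -bil_expand //; exact: pA.
Qed.

End QF.

Section Spec.
Variable R : realType.

Definition nrm N (v : 'cV[R]_N) : R := (v^T *m v) 0 0.

Lemma nrmE N (v : 'cV[R]_N) : nrm v = \sum_i v i 0 ^+ 2.
Proof. by rewrite /nrm mxE; apply: eq_bigr => i _; rewrite mxE expr2. Qed.

Lemma nrm_ge0 N (v : 'cV[R]_N) : 0 <= nrm v.
Proof. by rewrite nrmE; apply: sumr_ge0 => i _; exact: sqr_ge0. Qed.

Lemma nrm_gt0 N (v : 'cV[R]_N) : v != 0 -> 0 < nrm v.
Proof.
move=> vn0; rewrite lt_def nrm_ge0 andbT; apply/eqP => h.
move/eqP: vn0; apply; apply/matrixP => i j; rewrite !mxE (ord1 j).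
have : v i 0 ^+ 2 <= nrm v.
  rewrite nrmE (bigD1 i) //= lerDl; apply: sumr_ge0 => k _; exact: sqr_ge0.
by rewrite h => hh; apply/eqP; rewrite -sqrf_eq0 eq_le hh sqr_ge0.
Qed.

Lemma coord_le N (v : 'cV[R]_N) i : v i 0 ^+ 2 <= nrm v.
Proof. rewrite nrmE (bigD1 i) //= lerDl; apply: sumr_ge0 => k _; exact: sqr_ge0. Qed.

Lemma bilE N (A : 'M[R]_N) u w : bil A u w = \sum_i \sum_j u i 0 * A i j * w j 0.
Proof.
rewrite /bil mxE exchange_big; apply: eq_bigr => j _; rewrite mxE mulr_suml.
by apply: eq_bigr => i _; rewrite mxE.
Qed.

Definition Kb N (A : 'M[R]_N) := \sum_i \sum_j `|A i j|.

Lemma Kb_ge0 N (A : 'M[R]_N) : 0 <= Kb A.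
Proof. by apply: sumr_ge0 => i _; apply: sumr_ge0 => j _. Qed.

Lemma sqr_normr (x : R) : `|x| ^+ 2 = x ^+ 2.
Proof. exact: real_normK (num_real x). Qed.

Lemma pair_le N (v : 'cV[R]_N) i j : `|v i 0 * v j 0| <= nrm v.
Proof.
have hi := coord_le v i; have hj := coord_le v j.
rewrite normrM; rewrite -(sqr_normr (v i 0)) in hi; rewrite -(sqr_normr (v j 0)) in hj.
have := normr_ge0 (v i 0); have := normr_ge0 (v j 0).
have [le|le] := lerP `|v i 0| `|v j 0|; nra.
Qed.

Lemma bil_bound N (A : 'M[R]_N) v : `|bil A v v| <= Kb A * nrm v.
Proof.
rewrite bilE /Kb mulr_suml; apply: (le_trans (ler_norm_sum _ _ _)).
apply: ler_sum => i _; rewrite mulr_suml; apply: (le_trans (ler_norm_sum _ _ _)).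
apply: ler_sum => j _.
have -> : v i 0 * A i j * v j 0 = A i j * (v i 0 * v j 0) by ring.
by rewrite normrM ler_wpM2l // pair_le.
Qed.

Lemma rayleigh N (A : 'M[R]_N.+1) : A^T = A ->
  exists2 m0, eigenvalue A m0 & forall v, m0 * nrm v <= bil A v v.
Proof.
move=> sA.
pose S := [set r : R | exists2 v : 'cV[R]_N.+1, v != 0 & r = bil A v v / nrm v]%classic.
have lbS : forall r, S r -> - Kb A <= r.
  move=> r [v vn0 ->]; have np := nrm_gt0 vn0.
  rewrite ler_pdivlMr // mulNr lerNl; apply: le_trans (bil_bound A v).
  by rewrite -normrN ler_norm.
have neS : (S !=set0)%classic.
  pose c1 : 'cV[R]_N.+1 := const_mx 1.
  exists (bil A c1 c1 / nrm c1); exists c1 => //.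
  apply/eqP => /matrixP /(_ 0 0); rewrite !mxE => /eqP; by rewrite oner_eq0.
have hinf : has_inf S by split => //; exists (- Kb A) => r /lbS.
pose m0 := inf S.
have lb : forall v, m0 * nrm v <= bil A v v.
  move=> v; have [->|vn0] := eqVneq v 0.
    by rewrite /nrm /bil trmx0 !mul0mx mxE mulr0.
  have np := nrm_gt0 vn0.
  have : m0 <= bil A v v / nrm v.
    by apply: (ge_inf hinf.2); exists v.
  by rewrite ler_pdivlMr.
exists m0 => //.
pose B := A - m0%:M.
have qB : forall v, bil B v v = bil A v v - m0 * nrm v.
  move=> v; rewrite /bil /nrm /B mulmxBr mulmxBl !mxE; congr (_ - _).
  by rewrite mul_mx_scalar mulr_sumr; apply: eq_bigr => j _; rewrite !mxE mulrA.
have pB : psdm B by move=> v; rewrite qB subr_ge0.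
have sB : B^T = B by rewrite /B linearB /= tr_scalar_mx sA.
apply: contraT => nev.
have uB : B \in unitmx.
  rewrite -row_free_unit -kermx_eq0; move: nev; rewrite /eigenvalue negbK.
  by rewrite /eigenspace.
pose KB : R := Kb B + 1.
have KBp : 0 < KB by rewrite /KB; have := Kb_ge0 B; lra.
have h1 : forall v, nrm (B *m v) <= KB * bil B v v.
  move=> v; set w := B *m v.
  have ew : bil B w v = nrm w by rewrite /bil /nrm -mulmxA.
  have cs := cauchy_schwarz w v sB pB.
  have bw : bil B w w <= KB * nrm w.
    apply: le_trans (real_ler_norm _) _; first by rewrite realE pB.
    apply: le_trans (bil_bound B w) _; rewrite ler_wpM2r ?nrm_ge0 // /KB lerDl //.
  have q0 := pB v; have n0 := nrm_ge0 w.
  rewrite ew in cs.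
  have : nrm w ^+ 2 <= KB * nrm w * bil B v v.
    apply: le_trans cs _; exact: ler_wpM2r.
  have [nwp|nwn] := ltrP 0 (nrm w).
    move=> H; rewrite -(ler_pM2l nwp) -expr2; apply: le_trans H _.
    by rewrite le_eqVlt; apply/orP; left; apply/eqP; ring.
  move=> _; apply: le_trans nwn _; exact: mulr_ge0 (ltW KBp) q0.
pose M := invmx B.
pose K2 := Kb (M^T *m M).
have h2 : forall v, nrm v <= K2 * KB * bil B v v.
  move=> v; have -> : v = M *m (B *m v) by rewrite mulmxA mulVmx // mul1mx.
  set w := B *m v.
  have : nrm (M *m w) = bil (M^T *m M) w w by rewrite /nrm /bil trmx_mul !mulmxA.
  move=> ->.
  apply: le_trans (real_ler_norm _) _; first by rewrite num_real.
  apply: le_trans (bil_bound _ w) _; rewrite -mulrA ler_wpM2l ?Kb_ge0 //.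
  rewrite /w mulKmx //; exact: h1.
pose eps := (K2 * KB + 1)^-1.
have epsp : 0 < eps by rewrite invr_gt0; have := Kb_ge0 (M^T *m M); rewrite -/K2; nra.
have [r [v vn0 ->] hr] := inf_adherent epsp hinf.
have np := nrm_gt0 vn0.
rewrite ltr_pdivrMr // -/m0 in hr.
have := h2 v; have := qB v; have := pB v.
set q := bil B v v; set a := bil A v v; set nv := nrm v => q0 qe hn.
have D0 : 0 <= K2 * KB by apply: mulr_ge0; [exact: Kb_ge0| exact: ltW].
have De : (K2 * KB + 1) * eps = 1 by rewrite /eps mulfV // gt_eqF // ltr_pwDr.
have h3 : nv <= (K2 * KB + 1) * q by apply: le_trans hn _; rewrite mulrDl mul1r lerDl.
have h4 : q < eps * nv by move: hr; rewrite -/a -/nv mulrDl qe; lra.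
have : (K2 * KB + 1) * q < (K2 * KB + 1) * (eps * nv) by rewrite ltr_pM2l // ltr_pwDr.
rewrite mulrA De mul1r; lra.
Qed.
End Spec.

Section Tup.
Variable R : realType.

Lemma sum_tuple0 n (F : seq 'I_n -> R) : \sum_(t : 0.-tuple 'I_n) F t = F [::].
Proof.
rewrite (eq_bigr (fun _ => F [::])) => [|t _]; last by rewrite tuple0.
by rewrite sumr_const card_tuple expn0.
Qed.

Lemma sum_tuple_cons n p (F : seq 'I_n -> R) :
  \sum_(t : p.+1.-tuple 'I_n) F t = \sum_(i < n) \sum_(t : p.-tuple 'I_n) F (i :: t).
Proof.
rewrite pair_big /=.
rewrite (reindex (fun pr : 'I_n * p.-tuple 'I_n => [tuple of pr.1 :: pr.2])) //=.
apply: onW_bij; exists (fun t : p.+1.-tuple 'I_n => (thead t, [tuple of behead t])).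
  by case=> i t /=; rewrite theadE; congr (_, _); apply: val_inj.
by move=> t; rewrite [in RHS](tuple_eta t).
Qed.

Lemma sum_tuple_cat n a b (F : seq 'I_n -> R) :
  \sum_(t : (a + b).-tuple 'I_n) F t =
  \sum_(t1 : a.-tuple 'I_n) \sum_(t2 : b.-tuple 'I_n) F (t1 ++ t2).
Proof.
elim: a F => [|a IH] F.
  by rewrite (sum_tuple0 (fun s => \sum_(t2 : b.-tuple 'I_n) F (s ++ t2))).
rewrite [LHS](@sum_tuple_cons n (a + b)%N).
rewrite (@sum_tuple_cons n a (fun s => \sum_(t2 : b.-tuple 'I_n) F (s ++ t2))).
by apply: eq_bigr => i _; rewrite (IH (fun s => F (i :: s))).
Qed.

Lemma conv_sum (u v : seq R) (f : nat -> R) : (0 < size v)%N ->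
  \sum_(k < size (conv u v)) f k * (conv u v)`_k =
  \sum_(i < size u) \sum_(l < size v) f (i + l)%N * (u`_i * v`_l).
Proof.
move=> v0; set K := size (conv u v).
have eK : K = (size u + size v).-1 by rewrite /K size_mkseq.
have hK : forall j, (j < size u)%N -> (size v <= K - j)%N by move=> j; rewrite eK; lia.
transitivity (\sum_(k < K) \sum_(i < K) (if (i <= k)%N then f k * (u`_i * v`_(k - i)) else 0)).
  apply: eq_big => // k _; rewrite nth_mkseq -?eK // mulr_sumr.
  rewrite (big_ord_widen K (fun i => f k * (u`_i * v`_(k - i)))) ?big_mkcond //.
rewrite exchange_big.
rewrite (big_ord_widen K (fun i => \sum_(l < size v) f (i + l)%N * (u`_i * v`_l))); last by rewrite eK; lia.
rewrite [RHS]big_mkcond; apply: eq_bigr => i _.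
case: ltnP => iu; last first.
  by apply: big1 => k _; rewrite nth_default // mul0r mulr0 if_same.
rewrite -(big_mkord xpredT (fun k => if (i <= k)%N then f k * (u`_i * v`_(k - i)) else 0)).
rewrite (@big_cat_nat _ _ _ i) //=; last exact: ltnW (ltn_ord i).
rewrite big1_seq ?add0r; last first.
  by move=> k /andP[_]; rewrite mem_index_iota => /andP[_ ki]; rewrite leqNgt ki.
rewrite -{1}(add0n i) big_addn.
rewrite (@big_cat_nat _ _ _ (size v)) //=; last exact: hK.
rewrite [X in _ + X]big1_seq ?addr0; last first.
  move=> k /andP[_]; rewrite mem_index_iota => /andP[kv _].
  by rewrite leq_addl addnK (nth_default _ kv) !mulr0.
rewrite big_mkord; apply: eq_bigr => l _.
by rewrite leq_addl addnK addnC.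
Qed.

End Tup.

Section Conv.
Variable R : realType.
Variable n : nat.
Variable x : 'rV[R]_n.+1.

Definition tsum (s : seq 'I_n.+1) : nat := (\sum_(j <- s) nat_of_ord j)%N.
Definition tprod (s : seq 'I_n.+1) : R := \prod_(j <- s) x 0 j.

Lemma size_vseq : size (vseq x) = n.+1.
Proof. by rewrite size_map size_enum_ord. Qed.

Lemma nth_vseq (i : 'I_n.+1) : (vseq x)`_i = x 0 i.
Proof. by rewrite (nth_map i) ?size_enum_ord // nth_ord_enum. Qed.

Lemma size_convpow p : size (convpow (vseq x) p.+1) = (p.+1 * n).+1.
Proof.
elim: p => [|p IH]; first by rewrite size_vseq mul1n.
rewrite [convpow _ _]/= -/(convpow (vseq x) p.+1) /conv size_mkseq IH size_vseq.
lia.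
Qed.

Lemma convpowE p (f : nat -> R) :
  \sum_(k < (p.+1 * n).+1) f k * (convpow (vseq x) p.+1)`_k =
  \sum_(t : p.+1.-tuple 'I_n.+1) f (tsum t) * tprod t.
Proof.
elim: p f => [|p IH] f.
  rewrite (@sum_tuple_cons _ n.+1 0 (fun s => f (tsum s) * tprod s)).
  rewrite mul1n; apply: eq_bigr => i _.
  rewrite (sum_tuple0 (fun s => f (tsum (i :: s)) * tprod (i :: s))).
  by rewrite /tsum /tprod big_cons big_nil big_cons big_nil addn0 mulr1 nth_vseq.
have -> : convpow (vseq x) p.+2 = conv (vseq x) (convpow (vseq x) p.+1) by [].
have e : size (conv (vseq x) (convpow (vseq x) p.+1)) = (p.+2 * n).+1.
  by rewrite /conv size_mkseq size_convpow size_vseq; lia.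
rewrite -e conv_sum ?size_convpow //.
rewrite (@sum_tuple_cons _ n.+1 p.+1 (fun s => f (tsum s) * tprod s)).
rewrite size_vseq; apply: eq_bigr => i _.
transitivity ((vseq x)`_i * \sum_(l < (p.+1 * n).+1) f (i + l)%N * (convpow (vseq x) p.+1)`_l).
  by rewrite mulr_sumr; apply: eq_bigr => l _; ring.
rewrite (IH (fun l => f (i + l)%N)) mulr_sumr nth_vseq.
apply: eq_bigr => t _.
by rewrite /tsum /tprod big_cons big_cons; ring.
Qed.

Lemma bilconv a b (g : nat -> R) :
  \sum_(t : (a.+1 + b.+1).-tuple 'I_n.+1) g (tsum t) * tprod t =
  \sum_(j < (a.+1 * n).+1) \sum_(l < (b.+1 * n).+1)
     g (j + l)%N * ((convpow (vseq x) a.+1)`_j * (convpow (vseq x) b.+1)`_l).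
Proof.
rewrite (@sum_tuple_cat _ n.+1 a.+1 b.+1 (fun s => g (tsum s) * tprod s)).
transitivity (\sum_(t2 : b.+1.-tuple 'I_n.+1) tprod t2 *
   \sum_(t1 : a.+1.-tuple 'I_n.+1) g (tsum t1 + tsum t2)%N * tprod t1).
  rewrite exchange_big; apply: eq_bigr => t2 _; rewrite mulr_sumr.
  by apply: eq_bigr => t1 _; rewrite /tsum /tprod !big_cat /=; ring.
transitivity (\sum_(t2 : b.+1.-tuple 'I_n.+1) tprod t2 *
   \sum_(j < (a.+1 * n).+1) g (j + tsum t2)%N * (convpow (vseq x) a.+1)`_j).
  by apply: eq_bigr => t2 _; rewrite (@convpowE a (fun j => g (j + tsum t2)%N)).
transitivity (\sum_(j < (a.+1 * n).+1) (convpow (vseq x) a.+1)`_j *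
   \sum_(t2 : b.+1.-tuple 'I_n.+1) g (j + tsum t2)%N * tprod t2).
  under eq_bigr do rewrite mulr_sumr.
  rewrite exchange_big; apply: eq_bigr => j _; rewrite mulr_sumr.
  by apply: eq_bigr => t2 _; ring.
apply: eq_bigr => j _; rewrite -(@convpowE b (fun l => g (j + l)%N)) mulr_sumr.
by apply: eq_bigr => l _; ring.
Qed.

End Conv.

Section Shift.
Variable R : realType.

Definition shv N a (y : seq R) : 'cV[R]_N := \col_(r < N) (if (a <= r)%N then y`_(r - a) else 0).

Lemma shift_sum N a L (y : seq R) (Z : nat -> R) : (a + L.+1 <= N)%N -> size y = L.+1 ->
  \sum_(r < N) (if (a <= r)%N then y`_(r - a) else 0) * Z r = \sum_(j < L.+1) y`_j * Z (j + a)%N.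
Proof.
move=> hN sy.
rewrite -(big_mkord xpredT (fun r => (if (a <= r)%N then y`_(r - a) else 0) * Z r)).
rewrite (@big_cat_nat _ _ _ a) //=; last lia.
rewrite big1_seq ?add0r; last first.
  move=> k /andP[_]; rewrite mem_index_iota => /andP[_ ka].
  by rewrite leqNgt ka mul0r.
rewrite -{1}(add0n a) big_addn.
rewrite (@big_cat_nat _ _ _ L.+1) //=; last lia.
rewrite [X in _ + X]big1_seq ?addr0; last first.
  move=> k /andP[_]; rewrite mem_index_iota => /andP[kv _].
  by rewrite leq_addl addnK nth_default ?mul0r // sy.
rewrite big_mkord; apply: eq_bigr => l _.
by rewrite leq_addl addnK.
Qed.

Lemma bil_shv N (A : 'M[R]_N) (g : nat -> R) a b L (y : seq R) :
  (forall r r' : 'I_N, A r r' = g (r + r')%N) -> (a + L.+1 <= N)%N -> (b + L.+1 <= N)%N ->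
  size y = L.+1 ->
  bil A (shv N a y) (shv N b y) =
  \sum_(j < L.+1) \sum_(l < L.+1) g ((a + b) + (j + l))%N * (y`_j * y`_l).
Proof.
move=> hA ha hb sy; rewrite bilE.
transitivity (\sum_(r < N) (if (a <= r)%N then y`_(r - a) else 0) *
   \sum_(l < L.+1) y`_l * g (r + (l + b))%N).
  apply: eq_bigr => r _.
  rewrite -(shift_sum (fun r' => g (r + r')%N) hb sy) mulr_sumr.
  by apply: eq_bigr => r' _; rewrite !mxE hA; ring.
rewrite (shift_sum (fun r => \sum_(l < L.+1) y`_l * g (r + (l + b))%N) ha sy).
apply: eq_bigr => j _; rewrite mulr_sumr; apply: eq_bigr => l _.
have -> : (j + a + (l + b) = a + b + (j + l))%N by lia.
ring.
Qed.

Lemma nrm_shv N a L (y : seq R) : (a + L.+1 <= N)%N -> size y = L.+1 ->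
  nrm (shv N a y) = norm2sq y.
Proof.
move=> ha sy; rewrite nrmE.
pose Z r := if (a <= r)%N then y`_(r - a) else 0.
transitivity (\sum_(r < N) (if (a <= r)%N then y`_(r - a) else 0) * Z r).
  by apply: eq_bigr => r _; rewrite expr2 mxE.
rewrite (shift_sum Z ha sy) /norm2sq [RHS](big_nth 0) sy big_mkord.
by apply: eq_bigr => j _; rewrite /Z leq_addl addnK expr2.
Qed.
End Shift.


Section Main.
Variable R : realType.

Lemma exists_nz n (x : 'rV[R]_n) : x != 0 -> exists i, x 0 i != 0.
Proof.
move=> xn0; have [i /= hi|none] := pickP (fun i => x 0 i != 0); first by exists i.
case/eqP: xn0; apply/matrixP => a j; rewrite (ord1 a) mxE.
by have := none j; rewrite /= => /negbFE/eqP.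
Qed.

Lemma normpow_gt0 n (x : 'rV[R]_n) q : x != 0 -> 0 < normpow x q.
Proof.
move=> /exists_nz [i hi]; rewrite /normpow (bigD1 i) //=.
apply: ltr_pwDl; first by rewrite exprn_gt0 // normr_gt0.
by apply: sumr_ge0 => j _; rewrite exprn_ge0.
Qed.

Lemma normpow_ge_term n (x : 'rV[R]_n) q i : `|x 0 i| ^+ q <= normpow x q.
Proof.
rewrite /normpow (bigD1 i) //= lerDl.
by apply: sumr_ge0 => j _; rewrite exprn_ge0.
Qed.

Lemma norm_even (a : R) k : `|a| ^+ (k + k) = a ^+ (k + k).
Proof.
rewrite !exprD -normrX -normrM ger0_norm //.
by rewrite -expr2 sqr_ge0.
Qed.

Lemma norm2sq_ge0 (s : seq R) : 0 <= norm2sq s.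
Proof. by apply: sumr_ge0 => a _; exact: sqr_ge0. Qed.

Lemma conv_Poly (u v : seq R) : Poly (conv u v) = Poly u * Poly v.
Proof.
apply/polyP => k; rewrite coef_Poly.
have [kl|kg] := ltnP k (size (conv u v)).
  rewrite nth_mkseq; last by move: kl; rewrite size_mkseq.
  by rewrite coefM; apply: eq_bigr => i _; rewrite !coef_Poly.
rewrite nth_default // nth_default //.
apply: leq_trans (size_polyMleq _ _) _.
apply: leq_trans kg; rewrite /conv size_mkseq.
by rewrite -!subn1 leq_sub2r // leq_add // size_Poly.
Qed.

Lemma Poly_convpow (s : seq R) p : Poly (convpow s p.+1) = Poly s ^+ p.+1.
Proof.
elim: p => [|p IH]. rewrite expr1. reflexivity.
have -> : convpow s p.+2 = conv s (convpow s p.+1) by [].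
rewrite conv_Poly IH; exact: (esym (exprS _ _)).
Qed.

Lemma convpow_nz n (x : 'rV[R]_n.+1) p : x != 0 -> 0 < norm2sq (convpow (vseq x) p.+1).
Proof.
move=> /exists_nz [i hi].
have P0 : Poly (vseq x) != 0.
  apply/eqP => /polyP /(_ i); rewrite coef_Poly coef0 nth_vseq => e.
  by move/eqP: hi; rewrite e.
have := Poly_convpow (vseq x) p.
set y := convpow (vseq x) p.+1 => ePy.
have : Poly y != 0 by rewrite ePy expf_neq0.
move=> /eqP Pn0.
have [k hk] : exists k, y`_k != 0.
  exists (size (Poly y)).-1; rewrite -coef_Poly -lead_coefE lead_coef_eq0.
  exact/eqP.
have kl : (k < size y)%N by rewrite ltnNge; apply: contra hk => kg; rewrite nth_default.
rewrite /norm2sq (big_nth 0) big_mkord (bigD1 (Ordinal kl)) //=.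
apply: ltr_pwDl; first by rewrite exprn_even_gt0.
by apply: sumr_ge0 => j _; exact: sqr_ge0.
Qed.


Lemma psd_case m n (h : 'rV[R]_(m * (n - 1)).+1) c :
  (2 <= m)%N -> (1 <= n)%N -> ~~ odd (m * (n - 1)) -> is_hankel_const m n c ->
  psd (hankel_mx h) -> forall lmin, is_lambda_min (hankel_mx h) lmin ->
  forall lam, H_eigenvalue h lam -> c * lmin <= lam.
Proof.
move=> m2 n1 ev [[y0 y0n cE] cmin] pH lmin [eig lminP] lam [x [xn0 eqx]].
set H := hankel_mx h in pH eig lminP *.
have sH : H^T = H by apply/matrixP => i j; rewrite !mxE addnC.
have hA : forall r r', H r r' = hget h (r + r')%N by move=> r r'; rewrite mxE.
have pH' : psdm H by exact: pH.
have lmin0 : 0 <= lmin.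
  move/eigenvalueP: eig => [v vH vn0].
  have np : 0 < nrm v^T by apply: nrm_gt0; rewrite trmx_eq0.
  have := pH' v^T; rewrite /bil trmxK vH -scalemxAl mxE.
  by move: np; rewrite /nrm trmxK => np; rewrite (pmulr_lge0 _ np).
have ray : forall v, lmin * nrm v <= bil H v v.
  have [m0 em0 hm0] := rayleigh sH.
  move=> v; apply: le_trans (hm0 v); rewrite ler_wpM2r // ?nrm_ge0 //; exact: lminP.
have c0 : 0 <= c.
  rewrite -cE /c_ratio; case: ifP => _; apply: divr_ge0; (try exact: norm2sq_ge0);
    by apply: sumr_ge0 => i _; exact: exprn_ge0.
have cb : forall q p', c_ratio m x = norm2sq (convpow (vseq x) p') / normpow x q ->
    c * normpow x q <= norm2sq (convpow (vseq x) p').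
  move=> q p' e; have := cmin x xn0; rewrite e ler_pdivlMr //; exact: normpow_gt0.
have [n' en] : exists n', n = n'.+1 by exists n.-1; lia.
subst n.
case: (boolP (odd m)) => om.
  have [p ep] : exists p, m = (p.+1 + p.+1).+1.
    exists (m./2).-1; have := odd_double_half m; rewrite om; lia.
  subst m.
  have [k ek] : exists k, n' = (k + k)%N.
    exists n'./2; move: ev; rewrite oddM om /= => ev.
    have e1 : (n'.+1 - 1 = n')%N by lia.
    rewrite e1 in ev; have := odd_double_half n'; rewrite (negbTE ev); lia.
  subst n'.
  set y := convpow (vseq x) p.+1.
  set L := (p.+1 * (k + k))%N.
  have sy : size y = L.+1 by rewrite size_convpow.
  have eN : (((p.+1 + p.+1).+1 * ((k + k).+1 - 1))./2 = L + k)%N by rewrite /L; nia.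
  have hT : forall i : 'I_(k + k).+1, hankel_tensor_apply h x i =
      \sum_(j < L.+1) \sum_(l < L.+1) hget h (i + (j + l))%N * (y`_j * y`_l).
    move=> i; exact: (bilconv x p p (fun s => hget h (i + s)%N)).
  have Tsh : forall (i : 'I_(k + k).+1) a b, (i : nat) = (a + b)%N -> (a <= k)%N -> (b <= k)%N ->
      hankel_tensor_apply h x i = bil H (shv _ a y) (shv _ b y).
    move=> i a b eab ak bk.
    have ha : (a + L.+1 <= ((p.+1 + p.+1).+1 * ((k + k).+1 - 1))./2.+1)%N by rewrite eN; lia.
    have hb : (b + L.+1 <= ((p.+1 + p.+1).+1 * ((k + k).+1 - 1))./2.+1)%N by rewrite eN; lia.
    by rewrite hT (bil_shv hA ha hb sy) eab.
  have nrmy : forall a, (a <= k)%N -> nrm (shv (((p.+1 + p.+1).+1 * ((k + k).+1 - 1))./2.+1) a y) = norm2sq y.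
    move=> a ak; apply: nrm_shv sy; rewrite eN; lia.
  have cr : c * normpow x (p.+1 + p.+1) <= norm2sq y.
    have e1 : ((p.+1 + p.+1).+1 - 1 = p.+1 + p.+1)%N by lia.
    have e2 : (((p.+1 + p.+1).+1 - 1) %/ 2 = p.+1)%N by lia.
    have := cb ((p.+1 + p.+1).+1 - 1)%N p.+1; rewrite e1; apply.
    have o : odd (p + p.+1) by rewrite addnS /= oddD addbb.
    by rewrite /c_ratio /= o /= e2 e1.
  have [[i /andP[ei xi]]|none] : (exists i : 'I_(k + k).+1, ~~ odd i && (x 0 i != 0)) \/
      (forall i : 'I_(k + k).+1, ~~ odd i -> x 0 i = 0).
    case: (pickP (fun i : 'I_(k + k).+1 => ~~ odd i && (x 0 i != 0))) => [i hi|none].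
      by left; exists i.
    by right => i oi; have := none i; rewrite /= oi /= => /negbFE/eqP.
  - set a := (i : nat)./2.
    have eia : (i : nat) = (a + a)%N by have := odd_double_half i; rewrite (negbTE ei); lia.
    have ak : (a <= k)%N by have := ltn_ord i; lia.
    have X0 : 0 < x 0 i ^+ (p.+1 + p.+1) by rewrite -norm_even exprn_gt0 // normr_gt0.
    have XP : x 0 i ^+ (p.+1 + p.+1) <= normpow x (p.+1 + p.+1).
      by rewrite -norm_even normpow_ge_term.
    have key : lmin * (c * x 0 i ^+ (p.+1 + p.+1)) <= lam * x 0 i ^+ (p.+1 + p.+1).
      rewrite -[lam * _]eqx (Tsh i a a eia ak ak).
      apply: le_trans (ray _); rewrite nrmy //.
      rewrite ler_wpM2l //; apply: le_trans cr.
      by rewrite ler_wpM2l.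
    by move: key; rewrite mulrA (mulrC lmin) ler_pM2r.
  - have x00 : x 0 ord0 = 0 by apply: none.
    have T00 : hankel_tensor_apply h x ord0 = 0 by rewrite eqx x00 expr0n /= mulr0.
    have lmin_le0 : lmin <= 0.
      have ny := convpow_nz p xn0.
      have := ray (shv _ 0 y); rewrite nrmy // -(Tsh ord0 0 0) // T00.
      by rewrite pmulr_lle0.
    have lam0 : lam = 0.
      have [i xi] := exists_nz xn0.
      have oi : odd i by apply: contraR xi => oi; rewrite none.
      set a := (i : nat)./2.
      have eia : (i : nat) = (a + a.+1)%N by have := odd_double_half i; rewrite oi; lia.
      have ak : (a.+1 <= k)%N by have := ltn_ord i; lia.
      have aa : (a + a < (k + k).+1)%N by lia.
      have T2a : bil H (shv _ a y) (shv _ a y) = 0.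
        rewrite -(Tsh (Ordinal aa) a a) //= ?(ltnW ak) //.
        have xa : x 0 (Ordinal aa) = 0 by apply: none; rewrite /= oddD addbb.
        by rewrite eqx xa expr0n /= mulr0.
      have cs := cauchy_schwarz (shv _ a y) (shv _ a.+1 y) sH pH'.
      have Ti : hankel_tensor_apply h x i = bil H (shv _ a y) (shv _ a.+1 y).
        by apply: Tsh => //; exact: ltnW.
      rewrite T2a mul0r -Ti eqx in cs.
      have : lam * x 0 i ^+ (p.+1 + p.+1) = 0.
        by apply/eqP; rewrite -sqrf_eq0 eq_le cs sqr_ge0.
      move/eqP; rewrite mulf_eq0 expf_eq0 (negbTE xi) andbF orbF => /eqP //.
    by rewrite lam0; apply: mulr_ge0_le0.
have [p ep] : exists p, m = (p.+1 + p.+1)%N.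
  exists (m./2).-1; have := odd_double_half m; rewrite (negbTE om) add0n; lia.
subst m.
set y := convpow (vseq x) p.+1.
have sy : size y = (p.+1 * n').+1 by rewrite size_convpow.
have eT : \sum_(i < n'.+1) x 0 i * hankel_tensor_apply h x i =
   \sum_(j < (p.+1 * n').+1) \sum_(l < (p.+1 * n').+1) hget h (j + l)%N * (y`_j * y`_l).
  rewrite -(bilconv x p p (hget h)).
  rewrite (@sum_tuple_cons _ n'.+1 (p + p.+1) (fun s => hget h (tsum s) * tprod x s)).
  apply: eq_bigr => i _; rewrite /hankel_tensor_apply mulr_sumr; apply: eq_bigr => t _.
  by rewrite /tsum /tprod big_cons big_cons; ring.
have eE : \sum_(i < n'.+1) x 0 i * hankel_tensor_apply h x i = lam * normpow x (p.+1 + p.+1).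
  rewrite /normpow mulr_sumr; apply: eq_bigr => i _; rewrite eqx norm_even.
  have -> : x 0 i ^+ (p.+1 + p.+1) = x 0 i * x 0 i ^+ (p + p.+1) by exact: exprS.
  ring.
have ha : (0 + (p.+1 * n').+1 <= ((p.+1 + p.+1) * (n'.+1 - 1))./2.+1)%N by nia.
have eQ := bil_shv hA ha ha sy.
have cr : c * normpow x (p.+1 + p.+1) <= norm2sq y.
  by apply: cb; rewrite /c_ratio addnn odd_double /= divn2 doubleK -addnn.
have Pp := normpow_gt0 (p.+1 + p.+1) xn0.
set P := normpow x (p.+1 + p.+1) in cr Pp eE *.
have key : lmin * (c * P) <= lam * P.
  rewrite -eE eT; apply: le_trans (ler_wpM2l lmin0 cr) _.
  rewrite -(nrm_shv ha sy); apply: le_trans (ray _) _.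
  rewrite eQ le_eqVlt; apply/orP; left; apply/eqP.
  by apply: eq_bigr => j _; apply: eq_bigr => l _; rewrite add0n.
by move: key; rewrite mulrA (mulrC lmin) ler_pM2r.
Qed.

End Main.

Lemma eig_opp (R : realType) N (A : 'M[R]_N) a : eigenvalue (- A) (- a) = eigenvalue A a.
Proof.
apply/eigenvalueP/eigenvalueP => [[v vA vn0]|[v vA vn0]]; exists v => //.
  by move: vA; rewrite mulmxN scaleNr => /eqP; rewrite eqr_opp => /eqP.
by rewrite mulmxN vA scaleNr.
Qed.

Theorem theorem6 (R : realType) (m n : nat) (h : 'rV[R]_(m * (n - 1)).+1) (c : R) :
  (2 <= m)%N -> (1 <= n)%N -> ~~ odd (m * (n - 1)) ->
  is_hankel_const m n c ->
  (psd (hankel_mx h) ->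
     forall lmin, is_lambda_min (hankel_mx h) lmin ->
     forall lam, H_eigenvalue h lam -> c * lmin <= lam) /\
  (nsd (hankel_mx h) ->
     forall lmax, is_lambda_max (hankel_mx h) lmax ->
     forall lam, H_eigenvalue h lam -> lam <= c * lmax).
Proof.
move=> m2 n1 ev hc; split; first exact: psd_case.
move=> nH lmax [eig lmaxP] lam [x [xn0 eqx]].
have eH : hankel_mx (- h) = - hankel_mx h.
  by apply/matrixP => i j; rewrite !mxE /hget mxE.
have := @psd_case R m n (- h) c m2 n1 ev hc.
rewrite eH => /(_ _ (- lmax) _ (- lam)).
have -> : c * - lmax = - (c * lmax) by ring.
rewrite lerN2; apply.
- move=> v; rewrite mulmxN mulNmx; have := nH v; set q := (_ *m _ *m _); rewrite [(- q) 0 0]mxE; lra.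
- split; first by rewrite eig_opp.
  by move=> a; rewrite -[a]opprK eig_opp lerN2 => /lmaxP.
- exists x; split => // i.
  have -> : hankel_tensor_apply (- h) x i = - hankel_tensor_apply h x i.
    rewrite /hankel_tensor_apply -sumrN; apply: eq_bigr => t _.
    by rewrite /hget mxE mulNr.
  by rewrite eqx mulNr.
Qed.
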